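(* Let $F$ be a dill map with diameter $\delta$ and local rule $f$, and let $M,M'\in\mathbb N$ be such that for every $u\in A^*$ and every $j\in\{0,\dots,|u|-1\}$, $d_L(f^*(D_j(u)),f^*(u))\le M+\frac{|f^*(u)|-|f^*(D_j(u))|}{2}$ and $d_L(f^*(D_j(u)),f^*(u))\le M'-\frac{|f^*(u)|-|f^*(D_j(u))|}{2}$. Let $L>0$ and let $x\in A^{\mathbb N}$ be such that $|f(x_{[i,i+\delta)})|\ge L$ for every $i\in\mathbb N$. Then for every $y\in A^{\mathbb N}$, $\mathfrak d_L(F(x),F(y))\le\frac{M+M'}{L}\,\mathfrak d_L(x,y)$.
   Context: $A$ is a finite alphabet, $A^*$ the finite words, $A^+$ the nonempty finite words, $u_{[i,j)}=u_i\cdots u_{j-1}$. A dill map with diameter $\delta\ge1$ has local rule $f:A^\delta\to A^+$ and is $F(x)=f(x_{[0,\delta)})f(x_{[1,\delta+1)})\cdots$. $f^*(u)=f(u_{[0,\delta)})f(u_{[1,\delta+1)})\cdots f(u_{[|u|-\delta,|u|)})$ if $|u|\ge\delta$, and the empty word otherwise. $D_j(u)$ is $u$ with its letter at position $j$ deleted. The Levenshtein distance is $d_L(u,v)=\frac{|u|+|v|}{2}-\ell$, $\ell$ the length of a longest common subsequence. The Feldman pseudo-metric is $\mathfrak d_L(x,y)=\limsup_{l\to\infty}d_L(x_{[0,l)},y_{[0,l)})/l$. *)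

(* Defs.v *)
From HB Require Import structures.
From mathcomp Require Import all_boot all_order all_algebra.
From mathcomp Require Import all_classical all_reals all_analysis.
Set Implicit Arguments. Unset Strict Implicit. Unset Printing Implicit Defensive.
Import Order.TTheory GRing.Theory Num.Theory.

Section Dill.
Variable A : finType.

Definition lcs (u v : seq A) : nat :=
  \max_(i < (size u).+1 | [exists w : i.-tuple A, subseq w u && subseq w v]) i.

Definition dL (R : realType) (u v : seq A) : R :=
  ((size u + size v)%:R / 2 - (lcs u v)%:R)%R.

Definition delete_at (j : nat) (u : seq A) : seq A := take j u ++ drop j.+1 u.

(* the windows u_[i,i+delta), i = 0 .. |u|-delta (empty if |u| < delta) *)
Definition windows (delta : nat) (u : seq A) : seq (delta.-tuple A) :=
  pmap insub [seq take delta (drop i u) | i <- iota 0 (size u - delta).+1].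

Definition fstar (delta : nat) (f : delta.-tuple A -> seq A) (u : seq A) : seq A :=
  flatten [seq f w | w <- windows delta u].

Definition prefix (x : nat -> A) (l : nat) : seq A := mkseq x l.

Definition window_at (delta : nat) (x : nat -> A) (i : nat) : delta.-tuple A :=
  [tuple x (i + k) | k < delta].

(* the dill map F(x) = f(x_[0,delta)) f(x_[1,delta+1)) ... ; its n-th letter
   lies in f^*(x_[0,n+delta)), which has length >= n+1 when f has nonempty values *)
Definition dill (delta : nat) (f : delta.-tuple A -> seq A) (x : nat -> A) : nat -> A :=
  fun n => nth (x 0%N) (fstar f (prefix x (n + delta))) n.

Definition feldman (R : realType) (x y : nat -> A) : \bar R :=
  limn_esup (fun l : nat => ((dL R (prefix x l) (prefix y l)) / l%:R)%:E).

End Dill.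

(* Main.v *)
Require Import Defs.
From HB Require Import structures.
From mathcomp Require Import all_boot all_order all_algebra.
From mathcomp Require Import all_classical all_reals all_analysis.
From mathcomp Require Import zify ring lra.
Import Order.TTheory GRing.Theory Num.Theory.
Set Implicit Arguments. Unset Strict Implicit. Unset Printing Implicit Defensive.


Section Comb.
Variable A : finType.
Implicit Types u v w : seq A.

Lemma lcs_ge u v w : subseq w u -> subseq w v -> size w <= lcs u v.
Proof.
move=> wu wv; have hs : size w < (size u).+1 by rewrite ltnS size_subseq.
rewrite /lcs.
pose i := Ordinal hs.
have -> : size w = nat_of_ord i by [].
apply: (@leq_bigmax_cond _ (fun i : 'I_(size u).+1 => [exists w0 : i.-tuple A, subseq w0 u && subseq w0 v]) (fun i => nat_of_ord i) i).
by apply/existsP; exists (in_tuple w); rewrite /= wu wv.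
Qed.

Lemma lcs_wit u v : exists2 w, subseq w u /\ subseq w v & size w = lcs u v.
Proof.
rewrite /lcs.
set P := (fun i : 'I_(size u).+1 => [exists w0 : i.-tuple A, subseq w0 u && subseq w0 v]).
have hne : 0 < #|P|.
  apply/card_gt0P; exists ord0; rewrite /in_mem /= /P; apply/existsP.
  by exists [tuple]; rewrite /= !sub0seq.
have [i0 Pi0 ->] := @eq_bigmax_cond _ P (fun i => nat_of_ord i) hne.
move: Pi0; rewrite /in_mem /= /P => /existsP [w0 /andP [h1 h2]].
by exists (val w0); [split|rewrite size_tuple].
Qed.

Lemma lcs_sym u v : lcs u v = lcs v u.
Proof.
apply/eqP; rewrite eqn_leq; apply/andP; split.
  by have [w [h1 h2] <-] := lcs_wit u v; apply: lcs_ge.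
by have [w [h1 h2] <-] := lcs_wit v u; apply: lcs_ge.
Qed.

Lemma lcs_leL u v : lcs u v <= size u.
Proof. by have [w [h1 h2] <-] := lcs_wit u v; apply: size_subseq. Qed.

Lemma lcs_leR u v : lcs u v <= size v.
Proof. by have [w [h1 h2] <-] := lcs_wit u v; apply: size_subseq. Qed.

Lemma lcs_subseq u v : subseq u v -> lcs u v = size u.
Proof.
move=> h; apply/eqP; rewrite eqn_leq lcs_leL /=.
by apply: lcs_ge.
Qed.

Lemma lcs_refl u : lcs u u = size u.
Proof. exact/lcs_subseq/subseq_refl. Qed.

Lemma lcs_monoR u v v' : subseq v v' -> lcs u v <= lcs u v'.
Proof.
move=> h; have [w [h1 h2] <-] := lcs_wit u v.
by apply: lcs_ge => //; apply: subseq_trans h.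
Qed.

Lemma subseq_cons2 (x : A) u v : subseq u v -> subseq (x :: u) (x :: v).
Proof. by move=> h; rewrite /= eqxx. Qed.

Lemma subseq_consr (x : A) u v : subseq u v -> subseq u (x :: v).
Proof. by move=> h; apply: subseq_trans h (subseq_cons _ _). Qed.

Lemma mask_meet (s : seq A) : forall m1 m2, size m1 = size s -> size m2 = size s ->
  exists m, [/\ subseq (mask m s) (mask m1 s), subseq (mask m s) (mask m2 s) &
    size (mask m1 s) + size (mask m2 s) <= size (mask m s) + size s].
Proof.
elim: s => [|x s IH] m1 m2.
  by case: m1 => // _; case: m2 => // _; exists [::].
case: m1 => [|b1 m1] //; case: m2 => [|b2 m2] // /= [e1] [e2].
have [m [h1 h2 h3]] := IH _ _ e1 e2.
exists ((b1 && b2) :: m).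
case: b1; case: b2 => /=; split; rewrite ?eqxx ?h1 ?h2 //;
  try (by apply: subseq_consr); try lia.
Qed.

Lemma lcs_tri (a b c : seq A) : lcs a b + lcs b c <= lcs a c + size b.
Proof.
have [w1 [h1 h2] <-] := lcs_wit a b.
have [w2 [h3 h4] <-] := lcs_wit b c.
move/subseqP: h2 => [m1 e1 E1]; subst w1.
move/subseqP: h3 => [m2 e2 E2]; subst w2.
have [m [k1 k2 k3]] := mask_meet e1 e2.
apply: leq_trans k3 _; rewrite leq_add2r.
apply: lcs_ge; first exact: subseq_trans k1 h1.
exact: subseq_trans k2 h4.
Qed.

Lemma lcs_subL u' u v : subseq u' u -> lcs u v + size u' <= lcs u' v + size u.
Proof.
move=> h; have := lcs_tri u' u v; rewrite lcs_subseq //; lia.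
Qed.

Definition delete_atE j u : delete_at j u = take j u ++ drop j.+1 u := erefl.

Lemma size_delete j u : j < size u -> size (delete_at j u) = (size u).-1.
Proof.
move=> h; rewrite /delete_at size_cat size_take size_drop h.
lia.
Qed.

Lemma subseq_delete u : forall w, subseq w u -> size w < size u ->
  exists2 j, j < size u & subseq w (delete_at j u).
Proof.
elim: u => [|x u IH] w //= h hs.
case: w h hs => [|y w] h hs.
  by exists 0 => //; rewrite sub0seq.
case: (boolP (subseq (y :: w) u)) => hu.
  by exists 0 => //; rewrite /delete_at /= drop0.
move: h; rewrite /=; case: eqP => [exy|nexy] h; last by rewrite h in hu.
subst y.
have hs' : size w < size u by move: hs => /=; lia.
have [j hj hd] := IH w h hs'.
exists j.+1 => //.
by rewrite /delete_at /= eqxx.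
Qed.

End Comb.


Section DL.
Variable R : realType.
Variable A : finType.
Implicit Types u v w : seq A.
Local Open Scope ring_scope.

Lemma dL_sym u v : dL R u v = dL R v u.
Proof. by rewrite /dL lcs_sym addnC. Qed.

Lemma dL_tri u v w : dL R u w <= dL R u v + dL R v w.
Proof.
rewrite /dL.
have h := lcs_tri u v w.
have h' : ((lcs u v)%:R + (lcs v w)%:R <= (lcs u w)%:R + (size v)%:R :> R).
  by rewrite -!natrD ler_nat.
rewrite !natrD; lra.
Qed.

Lemma dL_refl u : dL R u u = 0.
Proof. rewrite /dL lcs_refl natrD; lra. Qed.

Lemma dL_ge0 u v : 0 <= dL R u v.
Proof.
rewrite /dL.
have h1 : ((lcs u v)%:R <= (size u)%:R :> R) by rewrite ler_nat lcs_leL.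
have h2 : ((lcs u v)%:R <= (size v)%:R :> R) by rewrite ler_nat lcs_leR.
rewrite natrD; lra.
Qed.

Lemma dL_le u v : dL R u v <= ((size u)%:R + (size v)%:R) / 2.
Proof. rewrite /dL natrD; have : (0 <= (lcs u v)%:R :> R) by []; lra. Qed.

Variable g : seq A -> seq A.
Variables M M' : R.
Notation sz u := ((size u)%:R : R).
Hypothesis H : forall u j, (j < size u)%N ->
  dL R (g (delete_at j u)) (g u) <= M + (sz (g u) - sz (g (delete_at j u))) / 2 /\
  dL R (g (delete_at j u)) (g u) <= M' - (sz (g u) - sz (g (delete_at j u))) / 2.

Lemma chain n : forall u w, subseq w u -> size u = (size w + n)%N ->
  dL R (g u) (g w) <= n%:R * M + (sz (g u) - sz (g w)) / 2 /\
  dL R (g u) (g w) <= n%:R * M' - (sz (g u) - sz (g w)) / 2.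
Proof.
elim: n => [|n IH] u w hs hz.
  have : w == u.
    by rewrite -(size_subseq_leqif hs).2 hz addn0.
  move/eqP => ->; rewrite dL_refl; split; lra.
have hlt : (size w < size u)%N by rewrite hz; lia.
have [j hj hd] := subseq_delete hs hlt.
have hz' : size (delete_at j u) = (size w + n)%N by rewrite size_delete // hz; lia.
have [i1 i2] := IH _ _ hd hz'.
have [h1 h2] := H hj.
have t := dL_tri (g u) (g (delete_at j u)) (g w).
rewrite dL_sym in h1 h2.
rewrite -[n.+1]addn1 natrD.
split; lra.
Qed.

Lemma combine u v : size u = size v ->
  dL R (g u) (g v) <= dL R u v * (M + M') + (sz (g u) - sz (g v)) / 2 /\
  dL R (g u) (g v) <= dL R u v * (M + M') - (sz (g u) - sz (g v)) / 2.
Proof.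
move=> e.
have [w [hu hv] hw] := lcs_wit u v.
have k1 := lcs_leL u v.
have k2 := lcs_leR u v.
have ea : size u = (size w + (size u - lcs u v))%N by rewrite hw subnKC.
have eb : size v = (size w + (size v - lcs u v))%N by rewrite hw subnKC.
have [a1 a2] := @chain (size u - lcs u v)%N u w hu ea.
have [b1 b2] := @chain (size v - lcs u v)%N v w hv eb.
have t := dL_tri (g u) (g w) (g v).
rewrite (dL_sym (g w)) in t.
have -> : dL R u v = (size u - lcs u v)%N%:R.
  rewrite /dL natrB // e natrD; lra.
rewrite -e in b1 b2.
split; lra.
Qed.

End DL.


Section Win.
Variable A : finType.
Variable delta : nat.
Variable f : delta.-tuple A -> seq A.

Definition G (z : nat -> A) m := flatten [seq f (window_at delta z i) | i <- iota 0 m].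

Lemma take_window (z : nat -> A) l i : (i + delta <= l)%N ->
  take delta (drop i (Defs.prefix z l)) = val (window_at delta z i).
Proof.
move=> h.
have hs : size (take delta (drop i (Defs.prefix z l))) = delta.
  by rewrite size_takel // size_drop /Defs.prefix size_mkseq; lia.
apply: (@eq_from_nth _ (z 0)).
  by rewrite hs size_tuple.
move=> k; rewrite hs => hk.
have hkd : (k < delta)%N by [].
rewrite nth_take // nth_drop nth_mkseq; last by lia.
by rewrite -(tnth_nth (z 0) (window_at delta z i) (Ordinal hkd)) tnth_mktuple.
Qed.

Lemma pmap_windows (z : nat -> A) l s : (forall i, i \in s -> i + delta <= l)%N ->
  pmap insub [seq take delta (drop i (Defs.prefix z l)) | i <- s] =
  [seq window_at delta z i | i <- s].
Proof.
elim: s => [|i s IH] //= h.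
rewrite IH; last by move=> j hj; apply: h; rewrite inE hj orbT.
have hi : (i + delta <= l)%N by apply: h; rewrite inE eqxx.
case: insubP => [t _ vt | nh] /=.
  by congr (_ :: _); apply: val_inj; rewrite vt take_window.
by move: nh; rewrite take_window // size_tuple eqxx.
Qed.

Lemma fstar_prefix (z : nat -> A) l : fstar f (Defs.prefix z l) = G z (l.+1 - delta).
Proof.
rewrite /fstar /windows /G /Defs.prefix size_mkseq -/(Defs.prefix z l).
case: (ltnP l delta) => hl.
  have -> : (l.+1 - delta = 0)%N by lia.
  have -> : (l - delta = 0)%N by lia.
  rewrite /= drop0; case: insubP => [t _ vt | nh] //=.
  move: (size_tuple t); rewrite vt size_take /Defs.prefix size_mkseq.
  by case: ltnP; lia.
have -> : (l - delta).+1 = (l.+1 - delta)%N by lia.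
rewrite pmap_windows; first by rewrite -map_comp.
move=> i; rewrite mem_iota; lia.
Qed.

Lemma G_cat z m k : G z (m + k) = G z m ++ flatten [seq f (window_at delta z i) | i <- iota m k].
Proof. by rewrite /G iotaD map_cat flatten_cat. Qed.

Lemma G_mono z m m' : (m <= m')%N -> exists c, G z m' = G z m ++ c.
Proof. move=> h; rewrite -(subnKC h) G_cat; eexists; reflexivity. Qed.

Lemma size_GS z m : size (G z m.+1) = (size (G z m) + size (f (window_at delta z m)))%N.
Proof. by rewrite -addn1 G_cat size_cat /= cats0. Qed.

Lemma G0 z : G z 0 = [::].
Proof. by []. Qed.

Lemma G_nth z m1 m2 i d : (i < size (G z m1))%N -> (i < size (G z m2))%N ->
  nth d (G z m1) i = nth d (G z m2) i.
Proof.
wlog h : m1 m2 / (m1 <= m2)%N.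
  move=> W h1 h2; case: (leqP m1 m2) => hm; first exact: W.
  by symmetry; apply: W => //; apply: ltnW.
move=> h1 h2; have [c ->] := G_mono z h.
by rewrite nth_cat h1.
Qed.

Hypothesis fpos : forall w, (0 < size (f w))%N.

Lemma size_G_ge z m : (m <= size (G z m))%N.
Proof. elim: m => [|m IH] //; rewrite size_GS; have := fpos (window_at delta z m); lia. Qed.

Hypothesis dpos : (0 < delta)%N.

Lemma dill_prefix z n m : (n <= size (G z m))%N -> Defs.prefix (dill f z) n = take n (G z m).
Proof.
move=> h; apply: (@eq_from_nth _ (z 0)).
  by rewrite /Defs.prefix size_mkseq size_take; case: ltnP; lia.
move=> i; rewrite /Defs.prefix size_mkseq => hi.
rewrite nth_mkseq // nth_take // /dill fstar_prefix.
have -> : ((i + delta).+1 - delta = i.+1)%N by lia.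
apply: G_nth; last by lia.
by have := size_G_ge z i.+1; lia.
Qed.

End Win.


Section Key.
Variable R : realType.
Variable A : finType.
Variable delta : nat.
Variable f : delta.-tuple A -> seq A.
Variables M M' : nat.
Hypothesis dpos : (0 < delta)%N.
Hypothesis fpos : forall w : delta.-tuple A, (0 < size (f w))%N.
Hypothesis H : forall (u : seq A) (j : nat), (j < size u)%N ->
     (dL R (fstar f (delete_at j u)) (fstar f u) <=
        M%:R + ((size (fstar f u))%:R - (size (fstar f (delete_at j u)))%:R) / 2)%R /\
     (dL R (fstar f (delete_at j u)) (fstar f u) <=
        M'%:R - ((size (fstar f u))%:R - (size (fstar f (delete_at j u)))%:R) / 2)%R.

Definition K := (\max_(w : delta.-tuple A) size (f w))%N.

Local Open Scope ring_scope.

Lemma take_sub_take (b c : seq A) n : subseq (take n b) (take n (b ++ c)).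
Proof.
rewrite take_cat; case: ltnP => h; first exact: subseq_refl.
rewrite take_oversize; [exact: prefix_subseq | exact: h].
Qed.

Lemma key (x y : nat -> A) n m :
  (1 <= m)%N -> (m <= n)%N -> (n <= size (G f x m))%N -> (size (G f x m.-1) < n)%N ->
  dL R (Defs.prefix (dill f x) n) (Defs.prefix (dill f y) n) <=
  (M + M')%:R * dL R (Defs.prefix x (m + delta).-1) (Defs.prefix y (m + delta).-1) + K%:R.
Proof.
move=> hm1 hmn hna hnb.
set l := (m + delta).-1.
have hl : (l.+1 - delta)%N = m by rewrite /l; lia.
set a := G f x m; set b := G f y m.
have [c hc] := G_mono f y hmn.
have hb' : (n <= size (G f y n))%N by apply: size_G_ge.
rewrite (dill_prefix fpos dpos hna) (dill_prefix fpos dpos hb') hc.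
have esz : size (Defs.prefix x l) = size (Defs.prefix y l) by rewrite /Defs.prefix !size_mkseq.
have [C1 C2] := combine H esz.
rewrite !fstar_prefix hl -/a -/b in C1 C2.
have hK : (size a <= size (G f x m.-1) + K)%N.
  rewrite /a; have -> : m = (m.-1).+1 by lia.
  rewrite size_GS leq_add2l /K.
  exact: (@leq_bigmax_cond _ xpredT (fun w => size (f w)) (window_at delta x m.-1)).
have S1 := lcs_subL a (take_subseq b n).
have S2 := lcs_monoR a (take_sub_take b c n).
have S3 := lcs_subL (take n (b ++ c)) (take_subseq a n).
rewrite (lcs_sym b a) (lcs_sym (take n b) a) in S1.
have ta : size (take n a) = n by rewrite size_takel.
have tbc : size (take n (b ++ c)) = n by rewrite size_takel // -hc.
rewrite ta in S3.
have dge := dL_ge0 R (Defs.prefix x l) (Defs.prefix y l).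
set D := dL R (Defs.prefix x l) (Defs.prefix y l) in C1 C2 dge *.
rewrite -/a -/b.
rewrite {1}/dL ta tbc.
have Mge : (0 : R) <= (M + M')%:R by [].
have Kge : (0 : R) <= K%:R by [].
move: C1 C2; rewrite /dL => C1 C2.
have DM : 0 <= D * (M + M')%:R by apply: mulr_ge0.
rewrite natrD in DM Mge.
case: (leqP (size b) n) => hbn.
  rewrite (take_oversize hbn) in S1 S2.
  rewrite -(ler_nat R) in S1; rewrite -(ler_nat R) in S2; rewrite -(ler_nat R) in S3.
  rewrite !natrD in S1 S2 S3 C1 C2 *.
  lra.
rewrite size_takel in S1; last exact: ltnW.
rewrite -(ler_nat R) in S1; rewrite -(ler_nat R) in S2; rewrite -(ler_nat R) in S3.
rewrite -(ler_nat R) in hK; rewrite -(ltr_nat R) in hnb.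
rewrite !natrD in S1 S2 S3 C1 C2 hK *.
lra.
Qed.

End Key.


Section Esup.
Variable R : realType.
Local Open Scope ereal_scope.
Implicit Types u : (\bar R)^nat.

Lemma limn_esup_inf u : limn_esup u = ereal_inf (range (esups u)).
Proof. rewrite limn_esup_lim; apply: cvg_lim => //; exact: cvg_esups_inf. Qed.

Lemma esup_le u N (a : \bar R) : (forall n, (N <= n)%N -> u n <= a) -> limn_esup u <= a.
Proof.
move=> hN; rewrite limn_esup_inf; apply: le_trans (ereal_inf_lbound _) _.
  by exists N.
apply: ub_ereal_sup => _ [n hn <-]; exact: hN.
Qed.

Lemma esup_lt u (a : \bar R) : limn_esup u < a -> exists N, forall n, (N <= n)%N -> u n < a.
Proof.
rewrite limn_esup_inf => /ereal_inf_lt [_ [N _ <-] h].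
exists N => n hn; apply: le_lt_trans h.
by apply: ereal_sup_ubound; exists n.
Qed.

Lemma esup_ge0 u : (forall n, 0 <= u n) -> 0 <= limn_esup u.
Proof.
move=> h; rewrite limn_esup_inf; apply: le_ereal_inf_tmp => _ [N _ <-].
apply: le_trans (h N) _; apply: ereal_sup_ubound; exists N => //=.
Qed.

End Esup.

Unset Implicit Arguments.
Set Strict Implicit.


Lemma size_G_L (R : realType) (A : finType) (delta : nat) (f : delta.-tuple A -> seq A)
  (L : R) (x : nat -> A) :
  (forall i : nat, L <= (size (f (window_at delta x i)))%:R)%R ->
  forall m, (L * m%:R <= (size (G f x m))%:R)%R.
Proof.
move=> h; elim=> [|m IH]; first by rewrite mulr0.
rewrite size_GS natrD -addn1 natrD mulrDr mulr1.
by apply: lerD => //; apply: h.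
Qed.

Lemma e01 (R : realType) (A : finType) (x y : nat -> A) l :
  (0 <= dL R (Defs.prefix x l) (Defs.prefix y l) / l%:R <= 1)%R.
Proof.
have h0 := dL_ge0 R (Defs.prefix x l) (Defs.prefix y l).
have h1 := dL_le R (Defs.prefix x l) (Defs.prefix y l).
rewrite /Defs.prefix !size_mkseq in h1.
apply/andP; split; first by apply: divr_ge0.
case: (posnP l) => [->|lp]; first by rewrite invr0 mulr0.
have lp' : (0 < l%:R :> R)%R by rewrite ltr0n.
rewrite ler_pdivrMr // mul1r; lra.
Qed.

Lemma arith_fin (R : realType) (c L Dl s e1 mm d n K dl : R) :
  (c*L*Dl <= c*L*((s+e1)*(mm+dl)))%R -> (d <= c*L*Dl + K)%R ->
  (c*L*(s+e1)*dl + K < e1*n)%R -> (c*(s+e1)*(L*mm) <= c*(s+e1)*n)%R ->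
  (d <= (c*s + e1*(c+1))*n)%R.
Proof. move=> *; lra. Qed.

Theorem lemmal (R : realType) (A : finType) (delta : nat)
  (f : delta.-tuple A -> seq A) (M M' : nat) (L : R) (x : nat -> A) :
  (0 < delta)%N ->
  (forall w : delta.-tuple A, (0 < size (f w))%N) ->
  (forall (u : seq A) (j : nat), (j < size u)%N ->
     (dL R (fstar f (delete_at j u)) (fstar f u) <=
        M%:R + ((size (fstar f u))%:R - (size (fstar f (delete_at j u)))%:R) / 2)%R /\
     (dL R (fstar f (delete_at j u)) (fstar f u) <=
        M'%:R - ((size (fstar f u))%:R - (size (fstar f (delete_at j u)))%:R) / 2)%R) ->
  (0 < L)%R ->
  (forall i : nat, L <= (size (f (window_at delta x i)))%:R)%R ->
  forall y : nat -> A,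
    (feldman R (dill f x) (dill f y) <=
       ((M + M')%:R / L)%:E * feldman R x y)%E.
Proof.
move=> dpos fpos H Lpos HL y.
rewrite /feldman.
set e := fun l => (dL R (Defs.prefix x l) (Defs.prefix y l) / l%:R)%R.
set S := limn_esup (fun l : nat => ((dL R (Defs.prefix x l) (Defs.prefix y l)) / l%:R)%:E).
have S0 : (0 <= S)%E.
  by apply: esup_ge0 => n; rewrite lee_fin; have /andP[] := e01 R _ x y n.
have S1 : (S <= 1)%E.
  by apply: (@esup_le _ _ 0) => n _; rewrite lee_fin; have /andP[] := e01 R _ x y n.
have Sfin : S \is a fin_num by rewrite ge0_fin_numE // (le_lt_trans S1) // ltry.
set s := fine S.
have Ss : S = s%:E by rewrite fineK.
have s0 : (0 <= s)%R by rewrite -lee_fin -Ss.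
rewrite Ss -EFinM.
set c := ((M + M')%:R / L)%R.
have c0 : (0 <= c)%R by apply: divr_ge0 => //; apply: ltW.
have cL : (c * L = (M + M')%:R)%R by rewrite /c mulfVK // gt_eqF.
apply/lee_addgt0Pr => eps heps.
set e1 := (eps / (c + 1))%R.
have e1pos : (0 < e1)%R by apply: divr_gt0 => //; lra.
have epsE : (eps = e1 * (c + 1))%R by rewrite /e1 mulfVK //; apply/eqP; lra.
have : (S < (s + e1)%:E)%E by rewrite Ss lte_fin; lra.
move/esup_lt => [N HN].
set Q := ((M + M')%:R * (s + e1))%R.
set C := (Q * delta%:R + (K f)%:R)%R.
set N' := maxn (size (G f x N)).+1 (Num.Def.trunc (C / e1)).+1.
apply: (@esup_le _ _ N') => n hn.
rewrite -EFinD lee_fin.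
have hn1 : (size (G f x N) < n)%N by move: hn; rewrite /N' geq_max => /andP[].
have hn2 : ((Num.Def.trunc (C / e1)).+1 <= n)%N by move: hn; rewrite /N' geq_max => /andP[].
have hex : exists m, (n <= size (G f x m))%N by exists n; apply: size_G_ge.
case: (ex_minnP hex) => m hm hmin.
have hm1 : (1 <= m)%N by case: m hm {hmin} => //=; lia.
have hmn : (m <= n)%N by apply: hmin; apply: size_G_ge.
have hmb : (size (G f x m.-1) < n)%N.
  rewrite ltnNge; apply/negP => /hmin; lia.
have hmN : (N < m)%N.
  rewrite ltnNge; apply/negP => hle.
  have [cc hcc] := G_mono f x hle.
  move: hn1; rewrite hcc size_cat; lia.
have KEY := key dpos fpos H y hm1 hmn hm hmb.
have hl : (m + delta).-1 = (m.-1 + delta)%N by lia.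
have hNl : (N <= m.-1 + delta)%N by lia.
have lpos : (0 < m.-1 + delta)%N by rewrite addn_gt0 dpos orbT.
rewrite hl in KEY.
set l := (m.-1 + delta)%N in KEY hNl lpos.
set Dl := dL R (Defs.prefix x l) (Defs.prefix y l) in KEY.
have lposR : (0 < l%:R :> R)%R by rewrite ltr0n.
have hel : (e l < s + e1)%R by rewrite -lte_fin; apply: HN.
have F2 : (Dl <= (s + e1) * l%:R)%R.
  by move: hel; rewrite /e -/Dl ltr_pdivrMr // => /ltW.
have F3 : ((M + M')%:R * Dl <= (M + M')%:R * ((s + e1) * l%:R))%R.
  by apply: ler_wpM2l.
have F4 : (L * (m.-1)%:R < n%:R)%R.
  apply: le_lt_trans (@size_G_L R A delta f L x HL m.-1) _; by rewrite ltr_nat.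
have F5 : (l%:R = (m.-1)%:R + delta%:R :> R)%R by rewrite /l natrD.
have F7 : (c * (s + e1) * (L * (m.-1)%:R) <= c * (s + e1) * n%:R)%R.
  by apply: ler_wpM2l; [apply: mulr_ge0; lra | apply: ltW].
have F8 : (C < e1 * n%:R)%R.
  rewrite mulrC -ltr_pdivrMr //.
  apply: lt_le_trans (truncnS_gt _) _; by rewrite ler_nat.
have n0 : (0 < n)%N := leq_trans hm1 hmn.
have npos : (0 < n%:R :> R)%R by rewrite ltr0n.
rewrite ler_pdivrMr // epsE.
rewrite /C /Q in F8.
rewrite F5 in F3.
rewrite -cL in F3 KEY F8.
have AF := @arith_fin R _ _ _ _ _ _ _ _ _ _ F3 KEY F8 F7.
exact AF.
Qed.
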